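(* Let $\gamma$ be a Jordan curve in $\mathbb{R}^2$ and let $x\in\gamma$. Suppose there exists an open disk $D$ of radius $1$ with $x\in\partial D$ such that (1) there exists $\varepsilon>0$ with $B(x,\varepsilon)\cap\operatorname{Int}\gamma\subset D$, and (2) for every $\eta>0$ we have $\gamma\cap B(x,\eta)\cap D\neq\emptyset$. Then $\gamma$ does not have bounded convex curvature.
   Context: For a Jordan curve $\gamma$, $\operatorname{Int}\gamma$ denotes the bounded component of $\mathbb{R}^2\setminus\gamma$. $B(x,\varepsilon)$ is the open disk of center $x$ and radius $\varepsilon$. A Jordan curve $\gamma$ has bounded convex curvature if for every point $x\in\gamma$ there exist an open disk $U_x$ of radius $1$ and $\varepsilon_x>0$ such that $x\in\partial U_x$ and $B(x,\varepsilon_x)\cap U_x\subset\operatorname{Int}\gamma$. *)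

(* Defs.v *)
(* The plane R^2 is modelled as R * R (product
   topology); all disks are EUCLIDEAN disks, defined explicitly (the library
   norm on R * R is the max-norm). *)
From HB Require Import structures.
From mathcomp Require Import all_boot all_order all_algebra.
From mathcomp Require Import all_classical all_reals all_analysis.
Set Implicit Arguments. Unset Strict Implicit. Unset Printing Implicit Defensive.
Import Order.TTheory GRing.Theory Num.Theory.
Import numFieldNormedType.Exports.
Local Open Scope classical_set_scope.
Local Open Scope ring_scope.

Section Plane.
Variable R : realType.

Definition dist2 (p q : R * R) : R := (p.1 - q.1) ^+ 2 + (p.2 - q.2) ^+ 2.

Definition disk (c : R * R) (r : R) : set (R * R) := [set p | dist2 p c < r ^+ 2].

Definition circle (c : R * R) (r : R) : set (R * R) := [set p | dist2 p c = r ^+ 2].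

(* A Jordan curve: the image of a continuous injective map from the circle,
   parameterized as f : [0,1] -> R^2 continuous, f 0 = f 1, injective on [0,1). *)
Definition jordan_curve (g : set (R * R)) : Prop :=
  exists f : R -> R * R,
    {within `[0, 1], continuous f} /\ f 0 = f 1 /\
    {in `[0, 1[ &, injective f} /\ g = f @` `[0, 1].

(* Int g: the bounded component(s) of R^2 \ g (for a Jordan curve there is
   exactly one by the Jordan curve theorem). *)
Definition Int (g : set (R * R)) : set (R * R) :=
  [set p | ~ g p /\ bounded_set (connected_component (~` g) p)].

Definition bounded_convex_curvature (g : set (R * R)) : Prop :=
  forall x, g x -> exists c : R * R, circle c 1 x /\
    exists2 e : R, 0 < e & disk x e `&` disk c 1 `<=` Int g.

End Plane.

(* Main.v *)
Require Import Defs.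
From HB Require Import structures.
From mathcomp Require Import all_boot all_order all_algebra.
From mathcomp Require Import all_classical all_reals all_analysis.
From mathcomp Require Import ring lra.
Import Order.TTheory GRing.Theory Num.Theory.
Local Open Scope classical_set_scope.
Local Open Scope ring_scope.

Lemma geo (R : realType) (x1 x2 c1 c2 d1 d2 r : R) : 0 < r ->
 (x1-c1)^+2+(x2-c2)^+2 = 1 -> (x1-d1)^+2+(x2-d2)^+2 = 1 ->
 (forall p1 p2, (p1-x1)^+2+(p2-x2)^+2 < r^+2 -> (p1-d1)^+2+(p2-d2)^+2 < 1 ->
    (p1-c1)^+2+(p2-c2)^+2 < 1) ->
 d1 = c1 /\ d2 = c2.
Proof.
move=> r0 hc hd H.
set a := (d1-c1)^+2 + (d2-c2)^+2.
have a0 : 0 <= a by rewrite /a addr_ge0 // sqr_ge0.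
have [az|apos] := eqVneq a 0.
  have s1 := sqr_ge0 (d1-c1); have s2 := sqr_ge0 (d2-c2).
  have h1 : (d1-c1)^+2 = 0 by move: az; rewrite /a; lra.
  have h2 : (d2-c2)^+2 = 0 by move: az; rewrite /a; lra.
  move/eqP: h1; rewrite sqrf_eq0 subr_eq0 => /eqP ->.
  by move/eqP: h2; rewrite sqrf_eq0 subr_eq0 => /eqP ->.
have apos' : 0 < a by rewrite lt0r apos.
exfalso.
set t := Num.min (1/2 : R) (r/4).
have t0 : 0 < t by rewrite /t lt_min; apply/andP; split; lra.
have t1 : t <= 1/2 by rewrite /t ge_min lexx.
have t2 : t <= r/4 by rewrite /t ge_min lexx orbT.
have a4 : a <= 4.
  have E : 2*((x1-c1)^+2+(x2-c2)^+2) + 2*((x1-d1)^+2+(x2-d2)^+2) - a = ((x1-c1) + (x1-d1))^+2 + ((x2-c2)+(x2-d2))^+2.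
    rewrite /a; ring.
  rewrite hc hd in E.
  have : 0 <= ((x1-c1) + (x1-d1))^+2 + ((x2-c2)+(x2-d2))^+2 by rewrite addr_ge0 // sqr_ge0.
  lra.
have := H (x1 + t*(d1-c1)) (x2 + t*(d2-c2)).
have E1 : (x1 + t*(d1-c1) - x1)^+2 + (x2 + t*(d2-c2) - x2)^+2 = t^+2 * a.
  rewrite /a; ring.
have E2 : (x1 + t*(d1-c1) - d1)^+2 + (x2 + t*(d2-c2) - d2)^+2 =
   ((x1-d1)^+2+(x2-d2)^+2) + t * (((x1-c1)^+2+(x2-c2)^+2) - ((x1-d1)^+2+(x2-d2)^+2) - a) + t^+2 * a.
  rewrite /a; ring.
have E3 : (x1 + t*(d1-c1) - c1)^+2 + (x2 + t*(d2-c2) - c2)^+2 =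
   ((x1-c1)^+2+(x2-c2)^+2) + t * (((x1-c1)^+2+(x2-c2)^+2) - ((x1-d1)^+2+(x2-d2)^+2) + a) + t^+2 * a.
  rewrite /a; ring.
rewrite E1 E2 E3 hc hd.
have tt : t^+2 <= r^+2/16.
  have := ler_pM (ltW t0) (ltW t0) t2 t2.
  have -> : r/4*(r/4) = r^+2/16 by field.
  by rewrite expr2.
have : t^+2 * a < r^+2.
  have := ler_wpM2l (sqr_ge0 t) a4.
  have : 0 < r^+2 by rewrite exprn_gt0.
  lra.
move=> -> /=.
have : 1 + t * (1 - 1 - a) + t ^+ 2 * a < 1.
  have h : 0 < t*a*(1-t) by rewrite !mulr_gt0 // subr_gt0; lra.
  have E : t*a*(1-t) = t*a - t^+2*a by ring.
  have E' : t * (1 - 1 - a) = - (t*a) by ring.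
  rewrite E'; lra.
move=> -> /=.
have h : 0 <= t*a*(1+t) by rewrite !mulr_ge0 //; lra.
have E : t * (1 - 1 + a) = t*a by ring.
have := sqr_ge0 t.
have := mulr_ge0 (sqr_ge0 t) a0.
rewrite E; lra.
Qed.

Lemma disk_sub (R : realType) (x : R * R) (r s : R) : 0 < r -> r <= s ->
  disk x r `<=` disk x s.
Proof.
move=> r0 rs p; rewrite /disk /= => h; apply: (lt_le_trans h).
rewrite !expr2; exact (ler_pM (ltW r0) (ltW r0) rs rs).
Qed.

Theorem lemma1 (R : realType) (g : set (R * R)) (x : R * R) :
  jordan_curve g -> g x ->
  (exists c : R * R, circle c 1 x /\
     (exists2 e : R, 0 < e & disk x e `&` Int g `<=` disk c 1) /\
     (forall eta : R, 0 < eta -> g `&` disk x eta `&` disk c 1 !=set0)) ->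
  ~ bounded_convex_curvature g.
Proof.
move=> _ gx [c [cx [[e e0 He] Hn]]] Hb.
have [c' [c'x [eps eps0 Heps]]] := Hb x gx.
set m := Num.min e eps.
have m0 : 0 < m by rewrite /m lt_min e0 eps0.
have me : m <= e by rewrite /m ge_min lexx.
have meps : m <= eps by rewrite /m ge_min lexx orbT.
have cc : c' = c.
  move: cx c'x He Heps; case: x {gx Hb Hn} => x1 x2; case: c => c1 c2;
    case: c' => d1 d2; rewrite /circle /disk /dist2 /= expr1n => cx dx He Heps.
  suff [-> ->] : d1 = c1 /\ d2 = c2 by [].
  apply: (@geo R x1 x2 c1 c2 d1 d2 m m0 cx dx).
  move=> p1 p2 h1 h2.
  have hI := Heps (p1, p2) (conj (@disk_sub R (x1,x2) m eps m0 meps (p1,p2) h1) h2).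
  exact: (He (p1, p2) (conj (@disk_sub R (x1,x2) m e m0 me (p1,p2) h1) hI)).
subst c'.
have [y [[gy yx] yc]] := Hn m m0.
have := Heps y (conj (@disk_sub R x m eps m0 meps y yx) yc).
by case.
Qed.
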